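(* Let $x_1,x_2,x_3,x_4\in\mathbb{Z}^3$ be the vertices of a Fano tetrahedron, and let $\lambda_1\le\lambda_2\le\lambda_3\le\lambda_4$ be non-negative integers with $\gcd(\lambda_1,\ldots,\lambda_4)=1$ and $\sum_i\lambda_ix_i=0$. Then there exist $g\in GL(3,\mathbb{Z})$, integers $a,b$ with $a>0$ and $a\lambda_3+b\lambda_4=1$, and $k,k',k''\in\mathbb{N}$ with $$0\le k''\lambda_4-a\lambda_1<k\lambda_4,\qquad 0\le k'\lambda_4-a\lambda_2<k\lambda_4,$$ such that $gx_1=(1,0,0)$, $gx_2=(0,1,0)$, $gx_3=(k''\lambda_4-a\lambda_1,\ k'\lambda_4-a\lambda_2,\ k\lambda_4)$ and $gx_4=(-k''\lambda_3-b\lambda_1,\ -k'\lambda_3-b\lambda_2,\ -k\lambda_3)$. Moreover, one of the two lower inequalities above can be an equality (i.e. $k''\lambda_4-a\lambda_1=0$ or $k'\lambda_4-a\lambda_2=0$) only if $\lambda_4=1$.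
   Context: A tetrahedron is called Fano if its vertices lie in $\mathbb{Z}^3$ and the only lattice point it contains other than its vertices is the origin, which lies strictly in its interior. *)

(* Defs.v *)
From HB Require Import structures.
From mathcomp Require Import all_boot all_order all_algebra.
Set Implicit Arguments. Unset Strict Implicit. Unset Printing Implicit Defensive.
Import Order.TTheory GRing.Theory Num.Theory.
Local Open Scope ring_scope.

Definition pt := 'cV[int]_3.

Definition toQ (p : pt) : 'cV[rat]_3 := map_mx (fun z : int => z%:~R) p.

Definition vec3 (a b c : int) : pt :=
  \col_(i < 3) (if i == 0 :> nat then a else if i == 1 :> nat then b else c).

Definition nondegenerate (x1 x2 x3 x4 : pt) : Prop :=
  \det (row_mx (row_mx (x2 - x1) (x3 - x1)) (x4 - x1)) != 0.

Definition in_tetra (x1 x2 x3 x4 : pt) (p : 'cV[rat]_3) : Prop :=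
  exists c1 c2 c3 c4 : rat,
    [/\ 0 <= c1, 0 <= c2, 0 <= c3 & 0 <= c4] /\ c1 + c2 + c3 + c4 = 1 /\
    p = c1 *: toQ x1 + c2 *: toQ x2 + c3 *: toQ x3 + c4 *: toQ x4.

Definition in_tetra_interior (x1 x2 x3 x4 : pt) (p : 'cV[rat]_3) : Prop :=
  exists c1 c2 c3 c4 : rat,
    [/\ 0 < c1, 0 < c2, 0 < c3 & 0 < c4] /\ c1 + c2 + c3 + c4 = 1 /\
    p = c1 *: toQ x1 + c2 *: toQ x2 + c3 *: toQ x3 + c4 *: toQ x4.

Definition fano (x1 x2 x3 x4 : pt) : Prop :=
  [/\ nondegenerate x1 x2 x3 x4,
      in_tetra_interior x1 x2 x3 x4 0 &
      forall p : pt, in_tetra x1 x2 x3 x4 (toQ p) ->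
        p = 0 \/ p = x1 \/ p = x2 \/ p = x3 \/ p = x4].

(* Main.v *)
Require Import Defs.
From HB Require Import structures.
From mathcomp Require Import all_boot all_order all_algebra.
From mathcomp Require Import ring lra zify.
Import Order.TTheory GRing.Theory Num.Theory.
Local Open Scope ring_scope.
Set Implicit Arguments. Unset Strict Implicit.

Lemma toQD (p q : pt) : toQ (p + q) = toQ p + toQ q.
Proof. by apply/matrixP=> i j; rewrite !mxE rmorphD. Qed.
Lemma toQN (p : pt) : toQ (- p) = - toQ p.
Proof. by apply/matrixP=> i j; rewrite !mxE rmorphN. Qed.
Lemma toQB (p q : pt) : toQ (p - q) = toQ p - toQ q.
Proof. by rewrite toQD toQN. Qed.
Lemma toQZ (z : int) (p : pt) : toQ (z *: p) = z%:~R *: toQ p.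
Proof. by apply/matrixP=> i j; rewrite !mxE rmorphM. Qed.
Lemma toQ0 : toQ 0 = 0.
Proof. by apply/matrixP=> i j; rewrite !mxE. Qed.
Lemma toQ_inj (p q : pt) : toQ p = toQ q -> p = q.
Proof.
move/matrixP=> H; apply/matrixP=> i j; move: (H i j); rewrite !mxE.
exact: intr_inj.
Qed.

Lemma relA (x1 x2 x3 x4 : pt) (w2 w3 w4 : rat) :
  Defs.nondegenerate x1 x2 x3 x4 ->
  w2 *: (toQ x2 - toQ x1) + w3 *: (toQ x3 - toQ x1) + w4 *: (toQ x4 - toQ x1) = 0 ->
  [/\ w2 = 0, w3 = 0 & w4 = 0].
Proof.
rewrite /Defs.nondegenerate => nd H.
set M := row_mx (row_mx (x2 - x1) (x3 - x1)) (x4 - x1).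
pose MQ := map_mx (fun z : int => (z%:~R : rat)) M.
have dM : \det MQ != 0 by rewrite det_map_mx intr_eq0.
have uM : MQ \in unitmx by rewrite unitmxE unitfE.
pose v : 'cV[rat]_(1 + 1 + 1) := col_mx (col_mx w2%:M w3%:M) w4%:M.
have Mv : MQ *m v = 0.
  rewrite /MQ /M !map_row_mx !mul_row_col !mul_mx_scalar -H.
  by rewrite -!toQB.
have v0 : v = 0 by rewrite -(mulKmx uM v) Mv mulmx0.
move/eqP: v0; rewrite !col_mx_eq0 => /andP[/andP[/eqP h2 /eqP h3] /eqP h4].
split.
- by move/matrixP: h2 => /(_ 0 0); rewrite !mxE.
- by move/matrixP: h3 => /(_ 0 0); rewrite !mxE.
- by move/matrixP: h4 => /(_ 0 0); rewrite !mxE.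
Qed.

Lemma relB (x1 x2 x3 x4 : pt) (c1 c2 c3 c4 w1 w2 w3 w4 : rat) :
  Defs.nondegenerate x1 x2 x3 x4 ->
  0 = c1 *: toQ x1 + c2 *: toQ x2 + c3 *: toQ x3 + c4 *: toQ x4 ->
  c1 + c2 + c3 + c4 = 1 ->
  w1 *: toQ x1 + w2 *: toQ x2 + w3 *: toQ x3 + w4 *: toQ x4 = 0 ->
  [/\ w1 = (w1 + w2 + w3 + w4) * c1, w2 = (w1 + w2 + w3 + w4) * c2,
      w3 = (w1 + w2 + w3 + w4) * c3 & w4 = (w1 + w2 + w3 + w4) * c4].
Proof.
move=> nd hc hs hw.
set S := w1 + w2 + w3 + w4.
have [] := relA (w2 := w2 - S * c2) (w3 := w3 - S * c3) (w4 := w4 - S * c4) nd.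
  apply/matrixP=> i j; move/matrixP: hc => /(_ i j); move/matrixP: hw => /(_ i j).
  rewrite !mxE => hw hc.
  rewrite -[0 in RHS](subr0 0) -[X in _ = X - _]hw -[X in _ = _ - X](mulr0 S).
  rewrite [X in _ = _ - S * X]hc /S.
  have -> : c1 = 1 - c2 - c3 - c4 by rewrite -hs; ring.
  ring.
move=> /eqP; rewrite subr_eq0 => /eqP h2 /eqP; rewrite subr_eq0 => /eqP h3.
move=> /eqP; rewrite subr_eq0 => /eqP h4.
split => //.
have -> : c1 = 1 - c2 - c3 - c4 by rewrite -hs; ring.
rewrite mulrBr mulrBr mulrBr mulr1 -h2 -h3 -h4 /S; ring.
Qed.

Lemma relC (x1 x2 x3 x4 : pt) (c1 c2 c3 c4 s1 s2 s3 s4 u1 u2 u3 u4 : rat) :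
  Defs.nondegenerate x1 x2 x3 x4 ->
  0 = c1 *: toQ x1 + c2 *: toQ x2 + c3 *: toQ x3 + c4 *: toQ x4 ->
  c1 + c2 + c3 + c4 = 1 ->
  s1 *: toQ x1 + s2 *: toQ x2 + s3 *: toQ x3 + s4 *: toQ x4 =
  u1 *: toQ x1 + u2 *: toQ x2 + u3 *: toQ x3 + u4 *: toQ x4 ->
  let S := (s1 - u1) + (s2 - u2) + (s3 - u3) + (s4 - u4) in
  [/\ s1 - u1 = S * c1, s2 - u2 = S * c2, s3 - u3 = S * c3 & s4 - u4 = S * c4].
Proof.
move=> nd hc hs E; apply: relB nd hc hs _.
apply/matrixP=> i j; move/matrixP: E => /(_ i j); rewrite !mxE.
move/eqP; rewrite -subr_eq0 => /eqP E; rewrite -[RHS]E; ring.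
Qed.

Lemma S0 (S c : rat) : 0 < c -> (0 : rat) - 0 = S * c -> S = 0.
Proof.
move=> hc; rewrite subr0 => /esym/eqP; rewrite mulf_eq0 => /orP[/eqP //|].
by move/eqP=> c0; move: hc; rewrite c0 ltxx.
Qed.

Lemma tri (x1 x2 x3 x4 : pt) (c1 c2 c3 c4 s1 s2 : rat) (p : pt) :
  Defs.nondegenerate x1 x2 x3 x4 ->
  [/\ 0 < c1, 0 < c2, 0 < c3 & 0 < c4] ->
  c1 + c2 + c3 + c4 = 1 ->
  0 = c1 *: toQ x1 + c2 *: toQ x2 + c3 *: toQ x3 + c4 *: toQ x4 ->
  (forall p : pt, in_tetra x1 x2 x3 x4 (toQ p) ->
        p = 0 \/ p = x1 \/ p = x2 \/ p = x3 \/ p = x4) ->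
  0 <= s1 -> 0 <= s2 -> s1 + s2 <= 1 ->
  toQ p = s1 *: toQ x1 + s2 *: toQ x2 ->
  (s1 = 0 /\ s2 = 0) \/ (s1 = 1 /\ s2 = 0) \/ (s1 = 0 /\ s2 = 1).
Proof.
move=> nd [p1 p2 p3 p4] hs hc emp h1 h2 h12 hp.
set t := 1 - s1 - s2.
have ht : 0 <= t by rewrite /t; lra.
have E : toQ p = s1 *: toQ x1 + s2 *: toQ x2 + 0 *: toQ x3 + 0 *: toQ x4.
  by rewrite hp !scale0r !addr0.
have : in_tetra x1 x2 x3 x4 (toQ p).
  exists (s1 + t * c1), (s2 + t * c2), (t * c3), (t * c4).
  split; first by split; rewrite ?addr_ge0 ?mulr_ge0 // ltW.
  split.
    have <- : s1 + s2 + t * (c1 + c2 + c3 + c4) = 1 by rewrite hs mulr1 /t; ring.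
    ring.
  apply/matrixP=> i j; move/matrixP: hc => /(_ i j); move/matrixP: hp => /(_ i j).
  rewrite !mxE => -> hc.
  rewrite -[LHS]addr0 -[X in _ + X = _](mulr0 t) [X in _ + t * X = _]hc; ring.
move/emp => [ep|[ep|[ep|[ep|ep]]]]; rewrite ep in E.
- have := relC nd hc hs (_ : s1 *: toQ x1 + s2 *: toQ x2 + 0 *: toQ x3 + 0 *: toQ x4 = 0 *: toQ x1 + 0 *: toQ x2 + 0 *: toQ x3 + 0 *: toQ x4).
  rewrite -E toQ0 !scale0r !addr0 => /(_ erefl) [e1 e2 e3 e4].
  move: (S0 p3 e3) e1 e2 => ->; rewrite !mul0r; lra.
- have := relC nd hc hs (_ : s1 *: toQ x1 + s2 *: toQ x2 + 0 *: toQ x3 + 0 *: toQ x4 = 1 *: toQ x1 + 0 *: toQ x2 + 0 *: toQ x3 + 0 *: toQ x4).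
  rewrite -E scale1r !scale0r !addr0 => /(_ erefl) [e1 e2 e3 e4].
  move: (S0 p3 e3) e1 e2 => ->; rewrite !mul0r; lra.
- have := relC nd hc hs (_ : s1 *: toQ x1 + s2 *: toQ x2 + 0 *: toQ x3 + 0 *: toQ x4 = 0 *: toQ x1 + 1 *: toQ x2 + 0 *: toQ x3 + 0 *: toQ x4).
  rewrite -E scale1r !scale0r add0r !addr0 => /(_ erefl) [e1 e2 e3 e4].
  move: (S0 p3 e3) e1 e2 => ->; rewrite !mul0r; lra.
- have := relC nd hc hs (_ : s1 *: toQ x1 + s2 *: toQ x2 + 0 *: toQ x3 + 0 *: toQ x4 = 0 *: toQ x1 + 0 *: toQ x2 + 1 *: toQ x3 + 0 *: toQ x4).
  rewrite -E scale1r !scale0r !add0r addr0 => /(_ erefl) [e1 e2 e3 e4].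
  move: (S0 p4 e4) e3 => ->; rewrite !mul0r; lra.
- have := relC nd hc hs (_ : s1 *: toQ x1 + s2 *: toQ x2 + 0 *: toQ x3 + 0 *: toQ x4 = 0 *: toQ x1 + 0 *: toQ x2 + 0 *: toQ x3 + 1 *: toQ x4).
  rewrite -E scale1r !scale0r !add0r => /(_ erefl) [e1 e2 e3 e4].
  move: (S0 p3 e3) e4 => ->; rewrite !mul0r; lra.
Qed.

Lemma empty2 (x1 x2 x3 x4 : pt) (m1 m2 D : int) (y : pt) :
  fano x1 x2 x3 x4 -> D != 0 ->
  m1 *: x1 + m2 *: x2 = D *: y -> (D %| m1)%Z /\ (D %| m2)%Z.
Proof.
move=> [nd [c1 [c2 [c3 [c4 [[p1 p2 p3 p4] [hs hc]]]]]] emp] D0 H.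
pose f1 : rat := m1%:~R / D%:~R.
pose f2 : rat := m2%:~R / D%:~R.
pose n1 := Num.floor f1. pose n2 := Num.floor f2.
have /andP[a1 b1] := floor_itv f1.
have /andP[a2 b2] := floor_itv f2.
rewrite -/n1 in a1 b1; rewrite -/n2 in a2 b2.
rewrite rmorphD /= in b1 b2.
pose y' := y - n1 *: x1 - n2 *: x2.
have DQ : (D%:~R : rat) != 0 by rewrite intr_eq0.
have Ey : toQ y' = (f1 - n1%:~R) *: toQ x1 + (f2 - n2%:~R) *: toQ x2.
  apply/matrixP=> i j; move/matrixP: H => /(_ i j); rewrite !mxE => /(congr1 (fun z : int => (z%:~R : rat))).
  rewrite !rmorphD /= !rmorphM /= => Hij; rewrite !rmorphN /= !rmorphM /=.
  rewrite /f1 /f2.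
  have -> : (y i j)%:~R = ((m1%:~R * (x1 i j)%:~R + m2%:~R * (x2 i j)%:~R) : rat) / D%:~R.
    by rewrite Hij; field.
  by field.
have hc' : 0 = c1 *: toQ x1 + c2 *: toQ x2 + c3 *: toQ x3 + c4 *: toQ x4 by rewrite hc.
have [le1|gt1] := lerP ((f1 - n1%:~R) + (f2 - n2%:~R)) 1.
- have := tri nd (And4 p1 p2 p3 p4) hs hc' emp _ _ le1 Ey.
  rewrite !subr_ge0 => /(_ a1 a2) => hh.
  have [e1 e2] : f1 - n1%:~R = 0 /\ f2 - n2%:~R = 0.
    case: hh => [//|[[e1 _]|[_ e2]]]; exfalso; lra.
  move/eqP: e1; rewrite subr_eq0 /f1 => /eqP e1.
  move/eqP: e2; rewrite subr_eq0 /f2 => /eqP e2.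
  have e1' : m1 = n1 * D.
    apply: (@intr_inj rat); rewrite rmorphM /= -e1; field => //.
  have e2' : m2 = n2 * D.
    apply: (@intr_inj rat); rewrite rmorphM /= -e2; field => //.
  by rewrite e1' e2'; split; apply: dvdz_mull.
- exfalso.
  have Ep : toQ (x1 + x2 - y') = (1 - (f1 - n1%:~R)) *: toQ x1 + (1 - (f2 - n2%:~R)) *: toQ x2.
    rewrite toQB toQD Ey.
    apply/matrixP=> i j; rewrite !mxE; ring.
  have := tri nd (And4 p1 p2 p3 p4) hs hc' emp _ _ _ Ep.
  have h1 : 0 <= 1 - (f1 - n1%:~R) by lra.
  have h2 : 0 <= 1 - (f2 - n2%:~R) by lra.
  have h3 : 1 - (f1 - n1%:~R) + (1 - (f2 - n2%:~R)) <= 1 by lra.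
  move=> /(_ h1 h2 h3) [[e1 e2]|[[e1 e2]|[e1 e2]]]; lra.
Qed.

Lemma indep12 (x1 x2 x3 x4 : pt) (al be : int) :
  fano x1 x2 x3 x4 -> al *: x1 + be *: x2 = 0 -> al = 0 /\ be = 0.
Proof.
move=> [nd [c1 [c2 [c3 [c4 [[p1 p2 p3 p4] [hs hc]]]]]] emp] H.
have hc' : 0 = c1 *: toQ x1 + c2 *: toQ x2 + c3 *: toQ x3 + c4 *: toQ x4 by rewrite hc.
have := relC nd hc' hs (_ : al%:~R *: toQ x1 + be%:~R *: toQ x2 + 0 *: toQ x3 + 0 *: toQ x4 =
   0 *: toQ x1 + 0 *: toQ x2 + 0 *: toQ x3 + 0 *: toQ x4).
rewrite !scale0r !addr0 -!toQZ -toQD H toQ0 => /(_ erefl) [e1 e2 e3 e4].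
move: (S0 p3 e3) e1 e2 => ->; rewrite !mul0r => /eqP; rewrite intr_eq0 => /eqP -> /eqP.
by rewrite intr_eq0 => /eqP ->.
Qed.

Lemma not3 (x1 x2 x3 x4 : pt) (al be : int) :
  fano x1 x2 x3 x4 -> al *: x1 + be *: x2 <> x3.
Proof.
move=> [nd [c1 [c2 [c3 [c4 [[p1 p2 p3 p4] [hs hc]]]]]] emp] H.
have hc' : 0 = c1 *: toQ x1 + c2 *: toQ x2 + c3 *: toQ x3 + c4 *: toQ x4 by rewrite hc.
have := relC nd hc' hs (_ : al%:~R *: toQ x1 + be%:~R *: toQ x2 + 0 *: toQ x3 + 0 *: toQ x4 =
   0 *: toQ x1 + 0 *: toQ x2 + 1 *: toQ x3 + 0 *: toQ x4).
rewrite !scale0r !addr0 add0r scale1r -!toQZ -toQD H => /(_ erefl) [e1 e2 e3 e4].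
move: (S0 p4 e4) e3 => ->; rewrite !mul0r; lra.
Qed.

Lemma vec3_eta (v : pt) : v = vec3 (v 0 0) (v 1 0) (v 2 0).
Proof.
apply/matrixP=> i j; rewrite !mxE (ord1 j).
by case: i => [[|[|[|//]]] Hi] /=; congr (v _ _); apply: val_inj.
Qed.

Lemma vec3E (a b c : int) :
  [/\ vec3 a b c 0 0 = a, vec3 a b c 1 0 = b & vec3 a b c 2 0 = c].
Proof. by rewrite !mxE. Qed.

Lemma vec3_inj (a b c a' b' c' : int) :
  vec3 a b c = vec3 a' b' c' -> [/\ a = a', b = b' & c = c'].
Proof.
move/matrixP=> E; split; [move: (E 0 0) | move: (E 1 0) | move: (E 2 0)]; rewrite !mxE //.

Qed.

Lemma mulmx_vec3 (M : 'M[int]_3) a b c : M *m vec3 a b c =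
  vec3 (M 0 0 * a + M 0 1 * b + M 0 2 * c) (M 1 0 * a + M 1 1 * b + M 1 2 * c)
       (M 2 0 * a + M 2 1 * b + M 2 2 * c).
Proof.
apply/matrixP=> i j; rewrite !mxE !big_ord_recl big_ord0 !mxE /=.
case: i => [[|[|[|//]]] Hi] /=; rewrite addr0 !addrA;
  by congr (_ * _ + _ * _ + _ * _); congr (M _ _); apply: val_inj.
Qed.

Lemma vec3D a b c a' b' c' : vec3 a b c + vec3 a' b' c' = vec3 (a + a') (b + b') (c + c').
Proof. by apply/matrixP=> i j; rewrite !mxE; case: ifP => //; case: ifP. Qed.
Lemma vec3Z z a b c : z *: vec3 a b c = vec3 (z * a) (z * b) (z * c).
Proof. by apply/matrixP=> i j; rewrite !mxE; case: ifP => //; case: ifP. Qed.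
Lemma vec3N a b c : - vec3 a b c = vec3 (- a) (- b) (- c).
Proof. by apply/matrixP=> i j; rewrite !mxE; case: ifP => //; case: ifP. Qed.
Lemma vec30 : vec3 0 0 0 = 0.
Proof. by apply/matrixP=> i j; rewrite !mxE; case: ifP => //; case: ifP. Qed.

Definition mk3 (a b c d e f g h k : int) : 'M[int]_3 := \matrix_(i < 3, j < 3)
  (if i == 0 :> nat then (if j == 0 :> nat then a else if j == 1 :> nat then b else c)
   else if i == 1 :> nat then (if j == 0 :> nat then d else if j == 1 :> nat then e else f)
   else (if j == 0 :> nat then g else if j == 1 :> nat then h else k)).

Lemma mk3_vec3 a b c d e f g h k x y z :
  mk3 a b c d e f g h k *m vec3 x y z =
  vec3 (a * x + b * y + c * z) (d * x + e * y + f * z) (g * x + h * y + k * z).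
Proof. by rewrite mulmx_vec3 !mxE. Qed.

Lemma mk3_mul a b c d e f g h k a' b' c' d' e' f' g' h' k' :
  mk3 a b c d e f g h k *m mk3 a' b' c' d' e' f' g' h' k' =
  mk3 (a * a' + b * d' + c * g') (a * b' + b * e' + c * h') (a * c' + b * f' + c * k')
      (d * a' + e * d' + f * g') (d * b' + e * e' + f * h') (d * c' + e * f' + f * k')
      (g * a' + h * d' + k * g') (g * b' + h * e' + k * h') (g * c' + h * f' + k * k').
Proof.
apply/matrixP=> i j; rewrite !mxE !big_ord_recl big_ord0 !mxE /= addr0.
case: i => [[|[|[|n]]] Hi]; case: j => [[|[|[|m]]] Hj] //=; ring.
Qed.

Lemma mk3_1 : mk3 1 0 0 0 1 0 0 0 1 = 1%:M.
Proof.
apply/matrixP=> i j; rewrite !mxE.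
by case: i => [[|[|[|//]]] Hi]; case: j => [[|[|[|//]]] Hj].
Qed.

Lemma basis12 (x1 x2 x3 x4 : pt) : fano x1 x2 x3 x4 ->
  exists G : 'M[int]_3, [/\ G \in unitmx, G *m x1 = vec3 1 0 0 & G *m x2 = vec3 0 1 0].
Proof.
move=> F.
have [L uL [R uR [d _ E]]] := int_Smith_normal_form (row_mx x1 x2).
set h := invmx L.
have uh : h \in unitmx by rewrite unitmx_inv.
have hX : h *m row_mx x1 x2 = (\matrix_(i, j) (d`_i *+ (i == j :> nat))) *m R.
  by rewrite {1}E -!mulmxA mulKmx.
have z1 : (h *m x1) 2 0 = 0.
  have := congr1 (fun M : 'M[int]_(3, 1 + 1) => M 2 (lshift 1 0)) hX; rewrite /= mul_mx_row row_mxEl => ->.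
  rewrite !mxE big1 // => k _; rewrite mxE.
  by case: k => [[|[|n]] Hk] //=; rewrite mulr0n mul0r.
have z2 : (h *m x2) 2 0 = 0.
  have := congr1 (fun M : 'M[int]_(3, 1 + 1) => M 2 (rshift 1 0)) hX; rewrite /= mul_mx_row row_mxEr => ->.
  rewrite !mxE big1 // => k _; rewrite mxE.
  by case: k => [[|[|n]] Hk] //=; rewrite mulr0n mul0r.
have hinj : forall u w : pt, h *m u = h *m w -> u = w.
  by move=> u w /(congr1 (mulmx (invmx h))); rewrite !mulKmx.
set al := (h *m x1) 0 0. set ga := (h *m x1) 1 0.
set be := (h *m x2) 0 0. set de := (h *m x2) 1 0.
have v1 : h *m x1 = vec3 al ga 0 by rewrite {1}(vec3_eta (h *m x1)) z1.
have v2 : h *m x2 = vec3 be de 0 by rewrite {1}(vec3_eta (h *m x2)) z2.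
set D := al * de - be * ga.
pose y1 := invmx h *m vec3 1 0 0.
pose y2 := invmx h *m vec3 0 1 0.
have Ey1 : de *: x1 + (- ga) *: x2 = D *: y1.
  apply: hinj; rewrite mulmxDr -!scalemxAr v1 v2 /y1 mulKVmx // !vec3Z vec3D /D.
  congr vec3; ring.
have Ey2 : (- be) *: x1 + al *: x2 = D *: y2.
  apply: hinj; rewrite mulmxDr -!scalemxAr v1 v2 /y2 mulKVmx // !vec3Z vec3D /D.
  congr vec3; ring.
have D0 : D != 0.
  apply/eqP=> D0.
  move: Ey1 Ey2; rewrite D0 !scale0r => /(indep12 F) [e1 /eqP e2] /(indep12 F) [e3 e4].
  rewrite oppr_eq0 in e2.
  have : h *m x1 = h *m 0 by rewrite v1 mulmx0 e4 (eqP e2) vec30.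
  move/hinj=> x10.
  have := indep12 (al := 1) (be := 0) F; rewrite scale1r scale0r addr0 => /(_ x10) [].
  by move/eqP; rewrite oner_eq0.
have [d1 d2] := empty2 F D0 Ey1.
have [d3 d4] := empty2 F D0 Ey2.
rewrite rpredN in d2; rewrite rpredN in d3.
have DD : D * D = 1.
  move: (divzK d1) (divzK d2) (divzK d3) (divzK d4).
  set a1 := (de %/ D)%Z; set a2 := (ga %/ D)%Z; set a3 := (be %/ D)%Z; set a4 := (al %/ D)%Z.
  move=> e1 e2 e3 e4.
  have : D * (D * (a4 * a1 - a3 * a2)) = D * 1.
    by rewrite mulr1 {3}/D -e1 -e2 -e3 -e4; ring.
  move/(mulfI D0)/(congr1 absz); rewrite abszM => /eqP; rewrite muln_eq1 => /andP[/eqP hD _].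
  by rewrite -expr2 -real_normK ?num_real // -abszE hD.
exists (mk3 (D * de) (- (D * be)) 0 (- (D * ga)) (D * al) 0 0 0 1 *m h).
split.
- rewrite unitmx_mul uh andbT.
  suff P : mk3 (D * de) (- (D * be)) 0 (- (D * ga)) (D * al) 0 0 0 1 *m
     mk3 al be 0 ga de 0 0 0 1 = 1%:M by case: (mulmx1_unit P).
  rewrite mk3_mul -mk3_1.
  congr mk3; rewrite -?DD /D; ring.
- by rewrite -mulmxA v1 mk3_vec3; congr vec3; rewrite -?DD /D; ring.
- by rewrite -mulmxA v2 mk3_vec3; congr vec3; rewrite -?DD /D; ring.
Qed.

Lemma comb (x y z : int) : x - y = z -> z = 0 -> x = y.
Proof. by move=> <- /eqP; rewrite subr_eq0 => /eqP. Qed.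

Lemma divle (l4 m : nat) (z : int) : m%:Z = l4%:Z * z -> (0 < m)%N -> (l4 <= m)%N.
Proof.
move=> E m0; apply: dvdn_leq => //.
have : (l4%:Z %| m%:Z)%Z by rewrite E dvdz_mulr.
by rewrite dvdzE.
Qed.

Lemma final_part (l1 l2 l3 l4 : nat) (a b k' k'' : int) :
  (0 < l1)%N -> (l1 <= l2 <= l3)%N -> (l3 <= l4)%N ->
  gcdn (gcdn (gcdn l1 l2) l3) l4 = 1%N ->
  a * l3%:Z + b * l4%:Z = 1 ->
  (k'' * l4%:Z - a * l1%:Z = 0 \/ k' * l4%:Z - a * l2%:Z = 0) -> l4 = 1%N.
Proof.
move=> l10 /andP[h12 h23] h34 hg Bez [E|E].
- have e : l1%:Z = l4%:Z * (l3%:Z * k'' + b * l1%:Z).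
    apply: (comb (z := l1%:Z * (1 - (a * l3%:Z + b * l4%:Z)) - l3%:Z * (k'' * l4%:Z - a * l1%:Z))).
      ring.
    by rewrite Bez E; ring.
  have := divle e l10 => h41.
  have e1 : l1 = l4 by apply/eqP; rewrite eqn_leq h41 (leq_trans h12 (leq_trans h23 h34)).
  have e2 : l2 = l4 by apply/eqP; rewrite eqn_leq (leq_trans h23 h34) -e1 h12.
  have e3 : l3 = l4 by apply/eqP; rewrite eqn_leq h34 -e2 h23.
  by move: hg; rewrite e1 e2 e3 !gcdnn.
- have l20 : (0 < l2)%N by apply: leq_trans h12.
  have e : l2%:Z = l4%:Z * (l3%:Z * k' + b * l2%:Z).
    apply: (comb (z := l2%:Z * (1 - (a * l3%:Z + b * l4%:Z)) - l3%:Z * (k' * l4%:Z - a * l2%:Z))).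
      ring.
    by rewrite Bez E; ring.
  have := divle e l20 => h42.
  have e2 : l2 = l4 by apply/eqP; rewrite eqn_leq h42 (leq_trans h23 h34).
  have e3 : l3 = l4 by apply/eqP; rewrite eqn_leq h34 -e2 h23.
  have e' : l1%:Z = l4%:Z * (a * l1%:Z + b * l1%:Z).
    apply: (comb (z := l1%:Z * (1 - (a * l3%:Z + b * l4%:Z)))).
      rewrite e3; ring.
    by rewrite Bez; ring.
  have := divle e' l10 => h41.
  have e1 : l1 = l4 by apply/eqP; rewrite eqn_leq h41 (leq_trans h12 (leq_trans h23 h34)).
  by move: hg; rewrite e1 e2 e3 !gcdnn.
Qed.

Lemma l1pos (x1 x2 x3 x4 : pt) (l1 l2 l3 l4 : nat) :
  fano x1 x2 x3 x4 ->
  (l1 <= l2 <= l3)%N -> (l3 <= l4)%N ->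
  gcdn (gcdn (gcdn l1 l2) l3) l4 = 1%N ->
  l1%:Z *: x1 + l2%:Z *: x2 + l3%:Z *: x3 + l4%:Z *: x4 = 0 -> (0 < l1)%N.
Proof.
move=> [nd [c1 [c2 [c3 [c4 [[p1 p2 p3 p4] [hs hc]]]]]] emp] /andP[h12 h23] h34 hg H.
have hc' : 0 = c1 *: toQ x1 + c2 *: toQ x2 + c3 *: toQ x3 + c4 *: toQ x4 by rewrite hc.
have := relC nd hc' hs (_ : (l1%:Z)%:~R *: toQ x1 + (l2%:Z)%:~R *: toQ x2 +
   (l3%:Z)%:~R *: toQ x3 + (l4%:Z)%:~R *: toQ x4 =
   0 *: toQ x1 + 0 *: toQ x2 + 0 *: toQ x3 + 0 *: toQ x4).
rewrite !scale0r !addr0 -!toQZ -!toQD H toQ0 => /(_ erefl) [e1 e2 e3 e4].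
rewrite lt0n; apply/negP => /eqP l0.
move: e1; rewrite l0 mulr0z => /esym/eqP; rewrite mulf_eq0 (gt_eqF p1) orbF => /eqP S.
move: e4; rewrite l0 mulr0z S mul0r => /eqP; rewrite intr_eq0 => /eqP [] l40.
move: hg; rewrite l40 l0 gcdn0.
have -> : l2 = 0%N by apply/eqP; rewrite -leqn0 -l40 (leq_trans h23 h34).
have -> : l3 = 0%N by apply/eqP; rewrite -leqn0 -l40 h34.
by [].
Qed.

Lemma nonneg_of (x y l : int) : 0 < l -> 0 <= y -> x * l = y -> 0 <= x.
Proof. move=> *; nia. Qed.

Lemma apos_lem (a0 : int) (l4 : nat) : (0 < l4)%N -> 0 < a0 + (`|a0| + 1)%:Z * l4%:Z.
Proof. move=> h; nia. Qed.

Unset Implicit Arguments.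
Theorem proposition3p1 (x1 x2 x3 x4 : pt) (l1 l2 l3 l4 : nat) :
  fano x1 x2 x3 x4 ->
  (l1 <= l2 <= l3)%N -> (l3 <= l4)%N ->
  gcdn (gcdn (gcdn l1 l2) l3) l4 = 1%N ->
  l1%:Z *: x1 + l2%:Z *: x2 + l3%:Z *: x3 + l4%:Z *: x4 = 0 ->
  exists (g : 'M[int]_3) (a b : int) (k k' k'' : nat),
    [/\ g \in unitmx, 0 < a & a * l3%:Z + b * l4%:Z = 1] /\
    [/\ 0 <= k''%:Z * l4%:Z - a * l1%:Z, k''%:Z * l4%:Z - a * l1%:Z < k%:Z * l4%:Z,
        0 <= k'%:Z * l4%:Z - a * l2%:Z & k'%:Z * l4%:Z - a * l2%:Z < k%:Z * l4%:Z] /\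
    [/\ g *m x1 = vec3 1 0 0, g *m x2 = vec3 0 1 0,
        g *m x3 = vec3 (k''%:Z * l4%:Z - a * l1%:Z) (k'%:Z * l4%:Z - a * l2%:Z) (k%:Z * l4%:Z)
      & g *m x4 = vec3 (- (k''%:Z * l3%:Z) - b * l1%:Z) (- (k'%:Z * l3%:Z) - b * l2%:Z)
                       (- (k%:Z * l3%:Z))] /\
    ((k''%:Z * l4%:Z - a * l1%:Z = 0 \/ k'%:Z * l4%:Z - a * l2%:Z = 0) -> l4 = 1%N).
Proof.
move=> F hl hl34 hg hrel.
have l10 := l1pos F hl hl34 hg hrel.
have /andP[h12 h23] := hl.
have l40 : (0 < l4)%N by apply: leq_trans l10 (leq_trans h12 (leq_trans h23 hl34)).
have l4ne0 : l4%:Z != 0 by rewrite eqz_nat -lt0n.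
have [G0 [uG0 g1 g2]] := basis12 F.
set p := (G0 *m x3) 0 0. set q := (G0 *m x3) 1 0. set r := (G0 *m x3) 2 0.
set s := (G0 *m x4) 0 0. set t := (G0 *m x4) 1 0. set u := (G0 *m x4) 2 0.
have v3 : G0 *m x3 = vec3 p q r by rewrite {1}(vec3_eta (G0 *m x3)).
have v4 : G0 *m x4 = vec3 s t u by rewrite {1}(vec3_eta (G0 *m x4)).
have := congr1 (mulmx G0) hrel.
rewrite mulmx0 !mulmxDr -!scalemxAr g1 g2 v3 v4 !vec3Z !vec3D -vec30 => /vec3_inj [R1' R2' R3'].
have R1 : l1%:Z + l3%:Z * p + l4%:Z * s = 0 by rewrite -[RHS]R1'; ring.
have R2 : l2%:Z + l3%:Z * q + l4%:Z * t = 0 by rewrite -[RHS]R2'; ring.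
have R3 : l3%:Z * r + l4%:Z * u = 0 by rewrite -[RHS]R3'; ring.
have hinj : forall w w' : pt, G0 *m w = G0 *m w' -> w = w'.
  by move=> w w' /(congr1 (mulmx (invmx G0))); rewrite !mulKmx.
have r0 : r != 0.
  apply/eqP=> r0; apply: (not3 (al := p) (be := q) F); apply: hinj.
  by rewrite mulmxDr -!scalemxAr g1 g2 v3 r0 !vec3Z vec3D; congr vec3; ring.
have gg : gcdn l3 l4 = 1%N.
  have d3 : (gcdn l3 l4 %| l3)%N := dvdn_gcdl _ _.
  have d4 : (gcdn l3 l4 %| l4)%N := dvdn_gcdr _ _.
  have d3' : ((gcdn l3 l4)%:Z %| l3%:Z)%Z by rewrite dvdzE.
  have d4' : ((gcdn l3 l4)%:Z %| l4%:Z)%Z by rewrite dvdzE.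
  have d1 : (gcdn l3 l4 %| l1)%N.
    have : ((gcdn l3 l4)%:Z %| l1%:Z)%Z.
      have -> : l1%:Z = - (l3%:Z * p) - l4%:Z * s.
        by apply: (comb (z := l1%:Z + l3%:Z * p + l4%:Z * s)); [ring | exact: R1].
      by rewrite rpredB ?rpredN // dvdz_mulr.
    by rewrite dvdzE.
  have d2 : (gcdn l3 l4 %| l2)%N.
    have : ((gcdn l3 l4)%:Z %| l2%:Z)%Z.
      have -> : l2%:Z = - (l3%:Z * q) - l4%:Z * t.
        by apply: (comb (z := l2%:Z + l3%:Z * q + l4%:Z * t)); [ring | exact: R2].
      by rewrite rpredB ?rpredN // dvdz_mulr.
    by rewrite dvdzE.
  have : (gcdn l3 l4 %| 1)%N by rewrite -hg !dvdn_gcd d1 d2 d3 d4.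
  by rewrite dvdn1 => /eqP.
have [a0 [b0 Bez0]] := Bezoutz l3%:Z l4%:Z.
have gz : gcdz l3%:Z l4%:Z = 1 by rewrite /gcdz /= gg.
pose N := (`|a0| + 1)%:Z.
pose a := a0 + N * l4%:Z.
pose b := b0 - N * l3%:Z.
have Bez : a * l3%:Z + b * l4%:Z = 1 by rewrite -gz -Bez0 /a /b; ring.
have apos : 0 < a by apply: apos_lem.
pose k0 := b * r - a * u.
have er' : r - k0 * l4%:Z = 0.
  apply: (comb (z := r * (1 - (a * l3%:Z + b * l4%:Z)) + a * (l3%:Z * r + l4%:Z * u))).
    rewrite /k0; ring.
  by rewrite Bez R3; ring.
have eu' : u + k0 * l3%:Z = 0.
  apply/eqP; rewrite -(mulIr_eq0 _ (mulIf l4ne0)).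
  apply/eqP; apply: (comb (z := (l3%:Z * r + l4%:Z * u) - l3%:Z * (r - k0 * l4%:Z))).
    ring.
  by rewrite R3 er'; ring.
have k00 : k0 != 0.
  by apply/eqP=> k00; move: er'; rewrite k00 mul0r subr0 => /eqP; rewrite (negbTE r0).
pose sg : int := if 0 <= k0 then 1 else -1.
set k := `|k0|%N.
have sgk : sg * k0 - k%:Z = 0.
  rewrite /sg /k; case: ifP => h.
    by rewrite mul1r gez0_abs // subrr.
  by rewrite mulN1r ltz0_abs ?subrr // ltNge h.
have sgc : sg = 1 \/ sg = -1 by rewrite /sg; case: ifP; [left | right].
have kpos : (0 < k)%N by rewrite absz_gt0.
pose K := k%:Z * l4%:Z.
have Kpos : 0 < K by rewrite mulr_gt0 // ltz_nat.
have K0 : K != 0 by rewrite gt_eqF.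
pose j := (p %/ K)%Z. pose j' := (q %/ K)%Z.
have ep := divz_eq p K. have eq' := divz_eq q K.
pose K'' := (b * p - a * s) - j * k%:Z.
pose K' := (b * q - a * t) - j' * k%:Z.
have eK'' : K'' * l4%:Z - a * l1%:Z = (p %% K)%Z.
  apply: (comb (z := (p - ((p %/ K)%Z * K + (p %% K)%Z)) -
          (p * (1 - (a * l3%:Z + b * l4%:Z)) + a * (l1%:Z + l3%:Z * p + l4%:Z * s)))).
    rewrite /K'' /j /K; ring.
  by rewrite Bez R1 -ep; ring.
have eK' : K' * l4%:Z - a * l2%:Z = (q %% K)%Z.
  apply: (comb (z := (q - ((q %/ K)%Z * K + (q %% K)%Z)) -
          (q * (1 - (a * l3%:Z + b * l4%:Z)) + a * (l2%:Z + l3%:Z * q + l4%:Z * t)))).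
    rewrite /K' /j' /K; ring.
  by rewrite Bez R2 -eq'; ring.
have hK'' : 0 <= K''.
  apply: (nonneg_of (l := l4%:Z) (y := (p %% K)%Z + a * l1%:Z)); first by rewrite ltz_nat.
    by rewrite addr_ge0 ?modz_ge0 // mulr_ge0 // ltW.
  by rewrite -eK''; ring.
have hK' : 0 <= K'.
  apply: (nonneg_of (l := l4%:Z) (y := (q %% K)%Z + a * l2%:Z)); first by rewrite ltz_nat.
    by rewrite addr_ge0 ?modz_ge0 // mulr_ge0 // ltW.
  by rewrite -eK'; ring.
pose T := mk3 1 0 (- (j * sg)) 0 1 (- (j' * sg)) 0 0 sg.
exists (T *m G0), a, b, k, `|K'|%N, `|K''|%N.
rewrite (gez0_abs hK'') (gez0_abs hK').
split.
  split => //; rewrite unitmx_mul uG0 andbT.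
  suff P : T *m mk3 1 0 j 0 1 j' 0 0 sg = 1%:M by case: (mulmx1_unit P).
  by rewrite mk3_mul -mk3_1; case: sgc => ->; congr mk3; ring.
split.
  by rewrite eK'' eK' -/K modz_ge0 // ltz_pmod // modz_ge0 // ltz_pmod.
split; last exact: final_part l10 hl hl34 hg Bez.
split.
- by rewrite -mulmxA g1 mk3_vec3; congr vec3; ring.
- by rewrite -mulmxA g2 mk3_vec3; congr vec3; ring.
- rewrite -mulmxA v3 mk3_vec3; congr vec3.
  + apply: (comb (z := p * (1 - (a * l3%:Z + b * l4%:Z)) + a * (l1%:Z + l3%:Z * p + l4%:Z * s)
        - j * sg * (r - k0 * l4%:Z) - j * l4%:Z * (sg * k0 - k%:Z))).
      rewrite /K''; ring.
    by rewrite Bez R1 er' sgk; ring.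
  + apply: (comb (z := q * (1 - (a * l3%:Z + b * l4%:Z)) + a * (l2%:Z + l3%:Z * q + l4%:Z * t)
        - j' * sg * (r - k0 * l4%:Z) - j' * l4%:Z * (sg * k0 - k%:Z))).
      rewrite /K'; ring.
    by rewrite Bez R2 er' sgk; ring.
  + apply: (comb (z := sg * (r - k0 * l4%:Z) + l4%:Z * (sg * k0 - k%:Z))).
      ring.
    by rewrite er' sgk; ring.
- rewrite -mulmxA v4 mk3_vec3; congr vec3.
  + apply: (comb (z := b * (l1%:Z + l3%:Z * p + l4%:Z * s) + s * (1 - (a * l3%:Z + b * l4%:Z))
        - j * (sg * (u + k0 * l3%:Z) - l3%:Z * (sg * k0 - k%:Z)))).
      rewrite /K''; ring.
    by rewrite Bez R1 eu' sgk; ring.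
  + apply: (comb (z := b * (l2%:Z + l3%:Z * q + l4%:Z * t) + t * (1 - (a * l3%:Z + b * l4%:Z))
        - j' * (sg * (u + k0 * l3%:Z) - l3%:Z * (sg * k0 - k%:Z)))).
      rewrite /K'; ring.
    by rewrite Bez R2 eu' sgk; ring.
  + apply: (comb (z := sg * (u + k0 * l3%:Z) - l3%:Z * (sg * k0 - k%:Z))).
      ring.
    by rewrite eu' sgk; ring.
Qed.
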